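(* Let $G$ be a finite $p$-group and let $H, C_1, C_2$ be normal subgroups of $G$ such that $C_1\neq C_2$, $C_1,C_2\subseteq H$, and $|H:C_1|=|H:C_2|=p$. Then every subgroup $C$ of $H$ with $C_1\cap C_2\subseteq C$ is a normal subgroup of $G$. *)

(* Defs.v *)
From mathcomp Require Import all_boot all_fingroup all_solvable.
Set Implicit Arguments.
Unset Strict Implicit.
Unset Printing Implicit Defensive.

(* Main.v *)
Require Import Defs.
From mathcomp Require Import all_boot all_fingroup all_solvable.
Local Open Scope group_scope.

Lemma comm_sub_index_p (gT : finGroupType) (p : nat) (G H K : {group gT}) :
  prime p -> p.-group G -> H <| G -> K <| G -> K \subset H ->
  #|H : K| = p -> [~: H, G] \subset K.
Proof.
move=> pr_p pG nsHG nsKG sKH iK.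
have nKG := normal_norm nsKG.
have sHG := normal_sub nsHG.
have nKH : H \subset 'N(K) by apply: subset_trans nKG.
rewrite -quotient_cents2 //.
have prHq : prime #|H / K| by rewrite card_quotient // iK.
have: H / K \subset 'Z(G / K).
  apply: prime_meetG => //; apply: meet_center_nil.
  - exact: pgroup_nil (quotient_pgroup _ pG).
  - exact: quotient_normal.
  - by rewrite -cardG_gt1 prime_gt1.
by move/subset_trans; apply; apply: subsetIr.
Qed.

Theorem lemma3 (gT : finGroupType) (p : nat) (G H C1 C2 : {group gT})
  (pr_p : prime p) (pG : p.-group G)
  (nHG : H <| G) (nC1G : C1 <| G) (nC2G : C2 <| G)
  (neqC : C1 :!=: C2) (sC1H : C1 \subset H) (sC2H : C2 \subset H)
  (iC1 : #|H : C1| = p) (iC2 : #|H : C2| = p) :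
  forall C : {group gT}, C \subset H -> C1 :&: C2 \subset C -> C <| G.
Proof.
move=> C sCH sDC.
have s1 := comm_sub_index_p _ _ _ _ _ pr_p pG nHG nC1G sC1H iC1.
have s2 := comm_sub_index_p _ _ _ _ _ pr_p pG nHG nC2G sC2H iC2.
rewrite /normal (subset_trans sCH (normal_sub nHG)) /=.
rewrite -commg_subr commGC.
apply: subset_trans (commgSS sCH (subxx G)) _.
apply: subset_trans sDC; by rewrite subsetI s1 s2.
Qed.
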